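(* Let $0\le m<M$ and let $n>2$ be an integer. For integers $0\le r\le s<n$ define $$E^{BW,U}_n(r,s)=\sum_{k=r+1}^{s}\frac{M\,r}{(k-1)\,n}+\sum_{k=s+1}^{n}(M+m)\frac{r(s-1)}{(k-1)(k-2)\,n},$$ where any term of the form $0/0$ is interpreted as $0$. Let $(\mathcal{M}_1(n),\mathcal{M}_2(n))$ be a point at which $E^{BW,U}_n$ attains its maximum. Then (i) $\lim_{n\to\infty}\mathcal{M}_1(n)/n=\dfrac{e^{-1+\frac{m}{M}}M}{m+M}$; (ii) $\lim_{n\to\infty}\mathcal{M}_2(n)/n=\dfrac{M}{m+M}$; (iii) $\lim_{n\to\infty}E^{BW,U}_n(\mathcal{M}_1(n),\mathcal{M}_2(n))=\dfrac{e^{-1+\frac{m}{M}}M^2}{m+M}$.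
   Context: $E^{BW,U}_n(r,s)$ is the expected payoff, in the Best-or-Worst secretary problem with $n$ candidates where choosing the overall best pays $M$ and the overall worst pays $m$, of the strategy that rejects the first $r$ candidates, then accepts the first candidate better than all preceding ones up to the $s$-th interview, and afterwards accepts the first candidate better or worse than all preceding ones. *)

(* Defs.v *)
From HB Require Import structures.
From mathcomp Require Import all_boot all_order all_algebra.
From mathcomp Require Import all_classical all_reals all_analysis.
Set Implicit Arguments. Unset Strict Implicit. Unset Printing Implicit Defensive.
Import Order.TTheory GRing.Theory Num.Theory.
Local Open Scope ring_scope.

(* Terms 0/0 are 0: in MathComp x / 0 = 0, and whenever a denominator
   vanishes (for r <= s) the numerator vanishes as well. *)
Definition EBWU (R : realType) (m M : R) (n r s : nat) : R :=
  \sum_(r.+1 <= k < s.+1) (M * r%:R / ((k%:R - 1) * n%:R))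
  + \sum_(s.+1 <= k < n.+1)
      ((M + m) * (r%:R * (s%:R - 1)) / ((k%:R - 1) * (k%:R - 2) * n%:R)).

Definition is_maximizer (R : realType) (m M : R) (n r s : nat) : Prop :=
  (r <= s)%N /\ (s < n)%N /\
  forall r' s' : nat, (r' <= s')%N -> (s' < n)%N ->
    EBWU m M n r' s' <= EBWU m M n r s.

(* Main.v *)
Require Import Defs.
From HB Require Import structures.
From mathcomp Require Import all_boot all_order all_algebra.
From mathcomp Require Import all_classical all_reals all_analysis.
From mathcomp Require Import ring lra zify.
From Stdlib Require Import Lia.
Import Order.TTheory GRing.Theory Num.Theory.
Import numFieldNormedType.Exports.
Local Open Scope classical_set_scope.
Local Open Scope ring_scope.
Set Implicit Arguments. Unset Strict Implicit.

Ltac nlia := repeat match goal with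
  | H : ?T |- _ =>
     lazymatch type of T with Prop =>
     lazymatch T with
     | _ -> _ => clear H
     | forall _, _ => clear H
     | context [leq _ _] => fail
     | @eq nat _ _ => fail
     | _ => clear H end end
  end; lia.

Section Fin.
Variables (R : realType) (m M : R).

Definition Hh (r s : nat) : R := \sum_(r <= j < s) (j%:R : R)^-1.
Definition Ts (n s : nat) : R :=
  \sum_(s.+1 <= k < n.+1) ((k%:R - 1) * (k%:R - 2) : R)^-1.
Definition Ff n r s := M * Hh r s + (M + m) * ((s%:R - 1) * Ts n s).

Lemma E_form n r s : EBWU m M n r s = r%:R / n%:R * Ff n r s.
Proof.
rewrite /EBWU /Ff /Hh [RHS]mulrDr; congr (_ + _).
  rewrite big_add1 /= mulrA big_distrr /=; apply: eq_bigr => i _.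
  by rewrite -natr1 addrK invfM; ring.
rewrite !big_distrr /=; apply: eq_bigr => k _.
by rewrite !invfM; ring.
Qed.

Lemma Ts_val n s : (2 <= s)%N -> (s <= n)%N ->
  Ts n s = (s%:R - 1)^-1 - (n%:R - 1)^-1.
Proof.
move=> hs; elim: n => [|n IH] hsn; first by lia.
case: (ltngtP s n.+1) => [hlt||heq]; last first.
- by rewrite /Ts heq big_geq // subrr.
- by lia.
rewrite /Ts big_nat_recr /=; last by [].
rewrite -/(Ts n s) IH; last by lia.
have hn : (2 <= n)%N by lia.
have h1 : (1 < (n%:R : R)) by rewrite ltr1n.
have hn0 : (n%:R : R) != 0 by apply/eqP => h; rewrite h in h1; lra.
have hn1 : (n%:R - 1 : R) != 0 by apply/eqP => h; lra.
rewrite -natr1.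
have -> : (n%:R + 1 - 1 : R) = n%:R by ring.
have -> : (n%:R + 1 - 2 : R) = n%:R - 1 by ring.
have h2 : (1 < (s%:R : R)) by rewrite ltr1n.
have hs1 : (s%:R - 1 : R) != 0 by apply/eqP => h; lra.
by field; rewrite hn0 hn1 hs1.
Qed.

Lemma Hh_nil s : Hh s s = 0.
Proof. by rewrite /Hh big_geq. Qed.

Lemma Hh_l r s : (r < s)%N -> Hh r s = (r%:R)^-1 + Hh r.+1 s.
Proof. by move=> h; rewrite /Hh big_ltn. Qed.

Lemma Hh_r r s : (r <= s)%N -> Hh r s.+1 = Hh r s + (s%:R)^-1.
Proof. by move=> h; rewrite /Hh big_nat_recr. Qed.

Lemma Hh_ge0 r s : 0 <= Hh r s.
Proof. by rewrite /Hh; apply: sumr_ge0 => i _; rewrite invr_ge0 ler0n. Qed.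

Lemma HL r s : (1 <= r)%N -> (r <= s)%N -> (s%:R : R) <= r%:R * expR (Hh r s).
Proof.
move=> hr; elim: s => [|s IH] hrs; first by lia.
case: (ltngtP r s.+1) => [hlt||heq]; last first.
- by rewrite heq Hh_nil expR0 mulr1.
- by lia.
rewrite Hh_r; last by lia.
have hs : (1 <= s)%N by lia.
have hs1 : (1 <= (s%:R : R)) by rewrite ler1n.
have := IH (ltnSE hlt).
rewrite expRD mulrA => ih.
have e1 := expR_ge1Dx (s%:R^-1 : R).
have e0 : 0 < 1 + (s%:R : R)^-1 by have := invr_gt0 (s%:R : R); rewrite (lt_le_trans ltr01 hs1); lra.
apply: (@le_trans _ _ (s%:R * (1 + (s%:R : R)^-1))).
  rewrite mulrDr mulr1 mulfV -?natr1 //.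
  by apply/eqP => h; rewrite h in hs1; lra.
apply: ler_pM => //; by rewrite ler0n.
Qed.

Lemma exp_inv_le (s : nat) : (1 <= s)%N ->
  (s%:R - 1) * expR ((s%:R : R)^-1) <= s%:R.
Proof.
move=> hs.
have hs1 : (1 <= (s%:R : R)) by rewrite ler1n.
have hs0 : (s%:R : R) != 0 by apply/eqP => h; rewrite h in hs1; lra.
set u := (s%:R : R)^-1.
have su : s%:R * u = 1 by rewrite /u mulfV.
have e := expR_ge1Dx (- u).
have ac : expR u * expR (- u) = 1 by rewrite -expRD subrr expR0.
have a0 : 0 < expR u := expR_gt0 u.
have -> : (s%:R - 1 : R) = s%:R * (1 - u) by rewrite mulrDr mulr1 mulrN su.
apply: (@le_trans _ _ (s%:R * (expR (-u)) * expR u)).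
  rewrite -!mulrA; apply: ler_wpM2l; first lra.
  by apply: ler_wpM2r; [lra | lra].
by rewrite -mulrA [expR (-u) * _]mulrC ac mulr1.
Qed.

Lemma HU r s : (2 <= r)%N -> (r <= s)%N ->
  (r%:R - 1) * expR (Hh r s) <= (s%:R : R) - 1.
Proof.
move=> hr; elim: s => [|s IH] hrs; first by lia.
case: (ltngtP r s.+1) => [hlt||heq]; last first.
- by rewrite heq Hh_nil expR0 mulr1.
- by lia.
rewrite Hh_r; last by lia.
have hs : (1 <= s)%N by lia.
have := IH (ltnSE hlt).
rewrite expRD mulrA => ih.
apply: (@le_trans _ _ ((s%:R - 1) * expR ((s%:R : R)^-1))).
  by apply: ler_wpM2r => //; apply/ltW/expR_gt0.
by rewrite -natr1 addrK; apply: exp_inv_le.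
Qed.

Definition Xf n s : R := (M + m) * ((s%:R - 1) / (n%:R - 1)) - m.

Lemma nat_ne0 (k : nat) : (1 <= k)%N -> (k%:R : R) != 0.
Proof. by move=> h; rewrite pnatr_eq0 -lt0n. Qed.

Lemma natm1_ne0 (k : nat) : (2 <= k)%N -> (k%:R - 1 : R) != 0.
Proof.
move=> h; have h1 : (1 < (k%:R : R)) by rewrite ltr1n.
by apply/eqP => e; lra.
Qed.

Lemma Ff_val n r s : (2 <= s)%N -> (s <= n)%N ->
  Ff n r s = M * Hh r s + M - Xf n s.
Proof.
move=> h2 hsn; rewrite /Ff /Xf Ts_val //.
have := natm1_ne0 h2; have := natm1_ne0 (leq_trans h2 hsn) => a b.
by field; rewrite a b.
Qed.

Lemma Ff_l n q s : (1 <= q)%N -> (q < s)%N ->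
  q%:R * Ff n q s = M + q%:R * Ff n q.+1 s.
Proof.
move=> h1 hqs; rewrite /Ff Hh_l //.
have := nat_ne0 h1 => a.
by field.
Qed.

Lemma Ff_r n r s : (1 < s)%N -> (s < n)%N -> (r <= s)%N ->
  Ff n r s.+1 = Ff n r s + M / s%:R - (M + m) / (n%:R - 1).
Proof.
move=> h2 hsn hrs; rewrite !Ff_val //; last by lia.
rewrite Hh_r // /Xf -natr1.
have := natm1_ne0 (ltnW (leq_ltn_trans h2 hsn)) => a.
have := nat_ne0 (ltnW h2) => b.
  by field; rewrite a b.
by lia.
Qed.

Lemma frac_le (a b x y : R) : 0 < x -> 0 < y -> a / x <= b / y -> a * y <= b * x.
Proof.
move=> hx hy h.
have -> : a * y = (a / x) * (x * y) by field; rewrite gt_eqF.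
have -> : b * x = (b / y) * (x * y) by field; rewrite gt_eqF.
by apply: ler_wpM2r => //; rewrite mulr_ge0 // ltW.
Qed.

Lemma natpred (k : nat) : (0 < k)%N -> (k.-1%:R : R) = k%:R - 1.
Proof. by case: k => // k _; rewrite -natr1 addrK. Qed.

Lemma lin_up (r x a b : R) : 0 < r -> r * (x + a - b) <= r * x -> a <= b.
Proof. by move=> r0; rewrite ler_pM2l // => h; lra. Qed.

Lemma lin_dn (r x a b : R) : 0 < r -> r * x <= r * (x + a - b) -> b <= a.
Proof. by move=> r0; rewrite ler_pM2l // => h; lra. Qed.

Lemma max_Ff n r s : (2 < n)%N -> is_maximizer m M n r s ->
  forall r' s', (r' <= s')%N -> (s' < n)%N ->
  r'%:R * Ff n r' s' <= r%:R * Ff n r s.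
Proof.
move=> hn [_ [_ hmx]] r' s' h1 h2; have := hmx r' s' h1 h2; rewrite !E_form.
have n0 : 0 < (n%:R : R) by rewrite ltr0n; lia.
have e x y : x / n%:R * y = (x * y) * (n%:R : R)^-1 by rewrite mulrAC.
by rewrite !e ler_pM2r ?invr_gt0.
Qed.

Lemma key n r s : 0 <= m -> m < M -> (2 < n)%N -> is_maximizer m M n r s ->
  [/\ (1 <= r)%N, (2 <= s)%N, M * (n%:R - 1) <= (M + m) * s%:R,
      (M + m) * (s%:R - 1) <= M * (n%:R - 1) &
      [/\ (r%:R - 1) * expR (Xf n s / M) <= s%:R - 1,
      (0 <= Xf n s -> s%:R <= (r%:R + 1) * expR (Xf n s / M)) &
      (0 <= Xf n s -> M * r%:R <= n%:R * EBWU m M n r s <= M * r%:R + M)]].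
Proof.
move=> hm hmM hn hmax.
have hM : 0 < M by apply: le_lt_trans hm hmM.
have hmx := max_Ff hn hmax.
case: hmax => hrs [hsn _].
have nR3 : (3 <= (n%:R : R)) by rewrite ler_nat.
set d := (n%:R - 1 : R).
have d2 : 2 <= d by rewrite /d; lra.
have F12 : 0 < Ff n 1 2.
  rewrite Ff_val //; last by nlia.
  rewrite Hh_l // Hh_nil addr0 invr1 /Xf -/d.
  have -> : (2%:R - 1 : R) = 1 by rewrite -natr1 addrK.
  have hw : d^-1 <= 2^-1 by rewrite lef_pV2 ?posrE //; lra.
  have hw0 : 0 < d^-1 by rewrite invr_gt0; lra.
  have : (M + m) * d^-1 <= (M + m) * 2^-1 by apply: ler_wpM2l => //; lra.
  rewrite mul1r; lra.
have hr1 : (1 <= r)%N.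
  case: (posnP r) => [r0|//].
  by have := hmx 1 2 isT hn; rewrite r0 mul0r mul1r; lra.
have hs2 : (2 <= s)%N.
  case: (leqP 2 s) => // hs1.
  have r1 : r = 1%N by nlia.
  have s1 : s = 1%N by nlia.
  have := hmx 1 2 isT hn; rewrite r1 s1.
  have -> : Ff n 1 1 = 0 by rewrite /Ff Hh_nil; ring.
  rewrite mulr0; move: F12; rewrite -[X in X * _ <= _ -> _]/(1 : R) mul1r; lra.
have FvS q : Ff n q s = M * Hh q s + M - Xf n s := Ff_val q hs2 (ltnW hsn).
have rup : (r < s)%N -> Ff n r.+1 s <= M.
  move=> hlt; have := hmx r.+1 s hlt hsn; have := Ff_l n hr1 hlt.
  rewrite -natr1 mulrDl mul1r; lra.
have rdown : (1 < r)%N -> M <= Ff n r s.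
  case E: r => [|q] //= h2.
  have := hmx q s ltac:(nlia) hsn; have := Ff_l n (q:=q) (s:=s) ltac:(nlia) ltac:(nlia).
  rewrite E -natr1 mulrDl mul1r; lra.
have sa : M * d <= (M + m) * s%:R.
  case: (ltngtP s.+1 n) => [hlt|hgt|heq].
  - have := hmx r s.+1 (leqW hrs) hlt.
    rewrite Ff_r // -/d.
    have r0 : 0 < (r%:R : R) by rewrite ltr0n.
    move=> /(lin_up r0) h''.
    by apply: frac_le => //; [rewrite ltr0n; nlia | lra].
  - by nlia.
  - rewrite /d -heq -natr1 addrK.
    by apply: ler_wpM2r; [rewrite ler0n | lra].
have sb : (M + m) * (s%:R - 1) <= M * d.
  case: (ltngtP r s) => [hlt|hgt|heq].
  - case: (ltngtP 2 s) => [h3|h|h2eq].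
    + have := hmx r s.-1 ltac:(nlia) ltac:(nlia).
      have := Ff_r (n:=n) (r:=r) (s:=s.-1) ltac:(nlia) ltac:(nlia) ltac:(nlia).
      rewrite prednK; last by nlia.
      move=> ->.
      have r0 : 0 < (r%:R : R) by rewrite ltr0n.
      rewrite -/d; move=> /(lin_dn r0) h''.
      have := frac_le (x := d) (y := s.-1%:R) _ _ h''.
      rewrite natpred; last by nlia.
      apply; first by lra.
      rewrite subr_gt0 ltr1n; nlia.
    + by nlia.
    + rewrite -h2eq; have -> : (2%:R - 1 : R) = 1 by rewrite -natr1 addrK.
      have : M * 2 <= M * d by apply: ler_wpM2l => //; lra.
      lra.
  - by nlia.
  - have := rdown ltac:(nlia); rewrite FvS heq Hh_nil mulr0 add0r /Xf -/d => h.
    have e : (M + m) * (s%:R - 1) = (M + m) * ((s%:R - 1) / d) * d.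
      by field; apply/eqP => e; lra.
    rewrite e; apply: (@le_trans _ _ (m * d)).
      by apply: ler_wpM2r; lra.
    by apply: ler_wpM2r; lra.
have hQ : (M + m) * ((s%:R - 1) / d) <= M.
  rewrite mulrA ler_pdivrMr //; lra.
have sc : (r%:R - 1) * expR (Xf n s / M) <= s%:R - 1.
  case: (ltngtP 1 r) => [h2|h0|h1eq].
  - have := rdown h2; rewrite FvS => h.
    have hx : Xf n s / M <= Hh r s by rewrite ler_pdivrMr // mulrC; lra.
    apply: le_trans (HU h2 hrs).
    apply: ler_wpM2l; first by rewrite subr_ge0 ler1n; nlia.
    by rewrite ler_expR.
  - by nlia.
  - rewrite -h1eq subrr mul0r subr_ge0 ler1n; nlia.
have sd : 0 <= Xf n s -> s%:R <= (r%:R + 1) * expR (Xf n s / M).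
  move=> hX.
  case: (ltngtP r s) => [hlt|hgt|heq].
  - have := rup hlt; rewrite FvS => h.
    have hx : Hh r.+1 s <= Xf n s / M by rewrite ler_pdivlMr // mulrC; lra.
    have := HL (r := r.+1) (s := s) ltac:(nlia) hlt.
    rewrite -natr1 => h'; apply: le_trans h' _.
    apply: ler_wpM2l; first by rewrite addr_ge0 // ler0n.
    by rewrite ler_expR.
  - by nlia.
  - have e1 := expR_ge1Dx (Xf n s / M).
    have : 0 <= Xf n s / M by rewrite divr_ge0 // ltW.
    rewrite heq => h0.
    have hs0 : 0 <= (s%:R : R) by rewrite ler0n.
    have : (s%:R + 1) * 1 <= (s%:R + 1) * expR (Xf n s / M).
      by apply: ler_wpM2l; lra.
    lra.
have se : 0 <= Xf n s -> M * r%:R <= n%:R * EBWU m M n r s <= M * r%:R + M.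
  move=> hX.
  have -> : n%:R * EBWU m M n r s = r%:R * Ff n r s.
    rewrite E_form; field; rewrite pnatr_eq0; nlia.
  have r0 : 0 <= (r%:R : R) by rewrite ler0n.
  apply/andP; split.
  - case: (ltngtP 1 r) => [h2|h0|h1eq].
    + by rewrite mulrC; apply: ler_wpM2l => //; apply: rdown.
    + by nlia.
    + rewrite -h1eq FvS Hh_l // invr1.
      have : 0 <= M * Hh 2 s by apply: mulr_ge0; [lra | apply: Hh_ge0].
      rewrite /Xf -/d mulrDr mulr1; lra.
  - case: (ltngtP r s) => [hlt|hgt|heq].
    + rewrite Ff_l //; have := rup hlt => h.
      have : r%:R * Ff n r.+1 s <= r%:R * M by apply: ler_wpM2l.
      lra.
    + by nlia.
    + rewrite FvS heq Hh_nil mulr0 add0r.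
      have : (s%:R : R) * (M - Xf n s) <= s%:R * M.
        by apply: ler_wpM2l; [rewrite ler0n | lra].
      lra.
by [].
Qed.

End Fin.


Section Lim.
Variables (R : realType) (m M : R).

Lemma L1 (x n lo : R) : 0 < n -> n * lo <= x -> lo <= x / n.
Proof. by move=> n0 h; rewrite ler_pdivlMr // mulrC. Qed.

Lemma L2 (x n hi : R) : 0 < n -> x <= n * hi -> x / n <= hi.
Proof. by move=> n0 h; rewrite ler_pdivrMr // mulrC. Qed.

Lemma inv_le_h n : (2 < n)%N -> ((n%:R - 1 : R))^-1 <= 2 * harmonic n.
Proof.
move=> hn.
have n3 : (3 <= (n%:R : R)) by rewrite ler_nat.
rewrite /harmonic /= -natr1.
have d0 : 0 < (n%:R - 1 : R) by lra.
rewrite -(@ler_pM2l _ (n%:R - 1)) // mulfV ?gt_eqF //.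
rewrite mulrA ler_pdivlMr; last by lra.
lra.
Qed.

Lemma invn_le_h n : (2 < n)%N -> ((n%:R : R))^-1 <= 2 * harmonic n.
Proof.
move=> hn; apply: le_trans (inv_le_h hn).
have n3 : (3 <= (n%:R : R)) by rewrite ler_nat.
rewrite lef_pV2 ?posrE; lra.
Qed.

Definition gg n s : R := s%:R / n%:R * expR (- (Xf m M n s / M)).

Lemma bounds n r s : 0 <= m -> m < M -> (2 < n)%N -> is_maximizer m M n r s ->
 [/\ M / (M + m) - 2 * harmonic n <= (s%:R - 1) / (n%:R - 1) <= M / (M + m),
     M / (M + m) - 2 * (M / (M + m)) * harmonic n <= s%:R / n%:R
        <= M / (M + m) + 2 * harmonic n,
     r%:R / n%:R <= gg n s + 2 * harmonic n,
     (0 <= Xf m M n s -> gg n s - 2 * harmonic n <= r%:R / n%:R) &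
     (0 <= Xf m M n s -> M * (r%:R / n%:R) <= EBWU m M n r s
        <= M * (r%:R / n%:R) + 2 * M * harmonic n)].
Proof.
move=> hm hmM hn hmax.
have [hr1 hs2 sa sb [sc sd se]] := key hm hmM hn hmax.
have hM : 0 < M by apply: le_lt_trans hmM.
have hMm : 0 < M + m by lra.
have n3 : (3 <= (n%:R : R)) by rewrite ler_nat.
have hdi := @inv_le_h n hn.
have hni := @invn_le_h n hn.
have n0 : 0 < (n%:R : R) by lra.
set d := (n%:R - 1 : R) in sa sb sc sd se hdi *.
have d0 : 0 < d by rewrite /d; lra.
set b := M / (M + m).
have hb0 : 0 <= b by rewrite /b divr_ge0 // ltW.
have bd : b * d <= s%:R by rewrite /b mulrAC ler_pdivrMr //; lra.
have bd2 : s%:R - 1 <= b * d by rewrite /b mulrAC ler_pdivlMr //; lra.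
set h := harmonic n in hdi hni *.
set X := Xf m M n s in sc sd se *.
have e0 : 0 < expR (X / M) := expR_gt0 _.
have eiE : expR (- (X / M)) = (expR (X / M))^-1 by rewrite expRN.
have ei0 : 0 <= (expR (X / M))^-1 by rewrite invr_ge0 ltW.
rewrite /gg -/X eiE.
have hn0 : (n%:R : R) != 0 by rewrite gt_eqF.
have he0 : expR (X / M) != 0 by rewrite gt_eqF.
split.
- apply/andP; split.
  + have : d^-1 <= 2 * h := hdi.
    have : b - d^-1 <= (s%:R - 1) / d.
      apply: L1 => //.
      have -> : d * (b - d^-1) = b * d - 1 by field; rewrite gt_eqF.
      lra.
    lra.
  + apply: L2 => //; lra.
- apply/andP; split.
  + have : b * (n%:R)^-1 <= b * (2 * h) by apply: ler_wpM2l.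
    have : b - b / n%:R <= s%:R / n%:R.
      apply: L1 => //.
      have -> : n%:R * (b - b / n%:R) = b * d by rewrite /d; field; rewrite gt_eqF.
      lra.
    lra.
  + have : s%:R / n%:R <= b + (n%:R)^-1.
      apply: L2 => //.
      have -> : n%:R * (b + (n%:R)^-1) = b * d + b + 1 by rewrite /d; field; rewrite gt_eqF.
      lra.
    lra.
- have h1 : r%:R - 1 <= (s%:R - 1) * (expR (X / M))^-1.
    have -> : (r%:R - 1 : R) = (r%:R - 1) * expR (X / M) * (expR (X / M))^-1.
      by rewrite -mulrA mulfV ?gt_eqF // mulr1.
    by apply: ler_wpM2r.
  have h2 : (s%:R - 1) * (expR (X / M))^-1 <= s%:R * (expR (X / M))^-1.
    by apply: ler_wpM2r => //; lra.
  have : r%:R / n%:R <= s%:R / n%:R * (expR (X / M))^-1 + (n%:R)^-1.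
    apply: L2 => //.
    have -> : n%:R * (s%:R / n%:R * (expR (X / M))^-1 + (n%:R)^-1)
      = s%:R * (expR (X / M))^-1 + 1 by field; rewrite ?hn0 ?he0.
    lra.
  lra.
- move=> hX.
  have h1 : s%:R * (expR (X / M))^-1 <= r%:R + 1.
    have := ler_wpM2r ei0 (sd hX).
    by rewrite -mulrA mulfV ?gt_eqF // mulr1.
  have : s%:R / n%:R * (expR (X / M))^-1 - (n%:R)^-1 <= r%:R / n%:R.
    apply: L1 => //.
    have -> : n%:R * (s%:R / n%:R * (expR (X / M))^-1 - (n%:R)^-1)
      = s%:R * (expR (X / M))^-1 - 1 by field; rewrite ?hn0 ?he0.
    lra.
  lra.
- move=> hX; have /andP [l u] := se hX.
  have ni0 : 0 <= (n%:R : R)^-1 by rewrite invr_ge0 ltW.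
  apply/andP; split.
  + rewrite mulrA; apply: L2 => //.
  + have eE : EBWU m M n r s = (n%:R * EBWU m M n r s) / n%:R.
      by field; rewrite ?hn0 ?he0.
    rewrite eE; apply: le_trans (ler_wpM2r ni0 u) _.
    have : M * (n%:R)^-1 <= M * (2 * h) by apply: ler_wpM2l => //; lra.
    rewrite mulrDl mulrA; lra.
Qed.

End Lim.

Unset Implicit Arguments.

Lemma cvgH (R : realType) (u : nat -> R) (l c : R) :
  u @ \oo --> l -> (fun n => u n + c * harmonic n) @ \oo --> l.
Proof.
move=> hu; rewrite -[l]addr0 -(mulr0 c).
apply: cvgD => //; apply: cvgM; [exact: cvg_cst | exact: cvg_harmonic].
Qed.

Theorem theorem6 (R : realType) (m M : R) (M1 M2 : nat -> nat) :
  0 <= m -> m < M ->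
  (forall n : nat, (2 < n)%N -> is_maximizer m M n (M1 n) (M2 n)) ->
  [/\ (fun n : nat => (M1 n)%:R / n%:R : R) @ \oo
        --> expR (-1 + m / M) * M / (m + M),
      (fun n : nat => (M2 n)%:R / n%:R : R) @ \oo --> M / (m + M)
    & (fun n : nat => EBWU m M n (M1 n) (M2 n)) @ \oo
        --> expR (-1 + m / M) * M ^+ 2 / (m + M)].
Proof.
move=> hm hmM hmax.
have hM : 0 < M by apply: le_lt_trans hmM.
have hMm : 0 < M + m by lra.
set b := M / (M + m).
have hQ : (fun n => ((M2 n)%:R - 1) / (n%:R - 1) : R) @ \oo --> b.
  apply: (squeeze_cvgr (f := fun n => b + (-2) * harmonic n)
                       (h := fun n => b + 0 * harmonic n)).
  - near=> n.
    have hn : (2 < n)%N by near: n; exact: nbhs_infty_gt.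
    have [/andP [l u] _ _ _ _] := bounds hm hmM hn (hmax n hn).
    move: l u; rewrite -/b => l u.
    apply/andP; split; lra.
  - by apply: cvgH; exact: cvg_cst.
  - by apply: cvgH; exact: cvg_cst.
have hX : (fun n => Xf m M n (M2 n)) @ \oo --> M - m.
  have -> : M - m = (M + m) * b - m by rewrite /b; field; rewrite gt_eqF.
  apply: cvgB; last exact: cvg_cst.
  by apply: cvgM; [exact: cvg_cst | exact: hQ].
have hXpos : \forall n \near \oo, 0 < Xf m M n (M2 n).
  by apply: (cvgr_gt (M - m) hX); lra.
have hs : (fun n => (M2 n)%:R / n%:R : R) @ \oo --> b.
  apply: (squeeze_cvgr (f := fun n => b + (- 2 * b) * harmonic n)
                       (h := fun n => b + 2 * harmonic n)).
  - near=> n.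
    have hn : (2 < n)%N by near: n; exact: nbhs_infty_gt.
    have [_ /andP [l u] _ _ _] := bounds hm hmM hn (hmax n hn).
    move: l u; rewrite -/b => l u.
    apply/andP; split; lra.
  - by apply: cvgH; exact: cvg_cst.
  - by apply: cvgH; exact: cvg_cst.
set L := b * expR (- ((M - m) / M)).
have hg : (fun n => gg m M n (M2 n)) @ \oo --> L.
  rewrite /gg /L; apply: cvgM; first exact: hs.
  have hXM : (fun n => - (Xf m M n (M2 n) / M)) @ \oo --> - ((M - m) / M).
    by apply: cvgN; apply: cvgM; [exact: hX | exact: cvg_cst].
  exact: (continuous_cvg _ (@continuous_expR R _) hXM).
have hr : (fun n => (M1 n)%:R / n%:R : R) @ \oo --> L.
  apply: (squeeze_cvgr (f := fun n => gg m M n (M2 n) + (- 2) * harmonic n)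
                       (h := fun n => gg m M n (M2 n) + 2 * harmonic n)).
  - near=> n.
    have hn : (2 < n)%N by near: n; exact: nbhs_infty_gt.
    have hX0 : 0 < Xf m M n (M2 n) by near: n; exact: hXpos.
    have [_ _ u l _] := bounds hm hmM hn (hmax n hn).
    have l' := l (ltW hX0).
    apply/andP; split; lra.
  - by apply: cvgH.
  - by apply: cvgH.
have hL : L = expR (-1 + m / M) * M / (m + M).
  have ee : - ((M - m) / M) = -1 + m / M by field; rewrite gt_eqF.
  by rewrite /L ee /b [M + m]addrC mulrC mulrA.
split.
- by rewrite -hL.
- by rewrite [m + M]addrC.
- have -> : expR (-1 + m / M) * M ^+ 2 / (m + M) = M * L.
    by rewrite hL expr2; ring.
  apply: (squeeze_cvgr (f := fun n => M * ((M1 n)%:R / n%:R) + 0 * harmonic n)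
                       (h := fun n => M * ((M1 n)%:R / n%:R) + (2 * M) * harmonic n)).
  - near=> n.
    have hn : (2 < n)%N by near: n; exact: nbhs_infty_gt.
    have hX0 : 0 < Xf m M n (M2 n) by near: n; exact: hXpos.
    have [_ _ _ _ e] := bounds hm hmM hn (hmax n hn).
    have /andP [l u] := e (ltW hX0).
    apply/andP; split; lra.
  - by apply: cvgH; apply: cvgM; [exact: cvg_cst | exact: hr].
  - by apply: cvgH; apply: cvgM; [exact: cvg_cst | exact: hr].
Unshelve. all: end_near.
Qed.
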